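(* Let $\mathcal{A}$ be a unital $A_\infty$ pre-category, $(A_1,A_2,A_3)$ a transversal triple, and $e_{1,2}\in\mathrm{Mor}(A_1,A_2)$, $e_{2,3}\in\mathrm{Mor}(A_2,A_3)$ quasi-isomorphisms. Then $e_{1,3}=m_2(e_{2,3},e_{1,2})\in\mathrm{Mor}(A_1,A_3)$ is a quasi-isomorphism.
   Context: An $A_\infty$ pre-category consists of a set of objects; for each $k\ge1$ a set of transversal $k$-tuples, such that forgetting entries of a transversal tuple yields a transversal tuple; for each transversal pair $(A,B)$ a $\mathbb{Z}/2$-graded vector space $\mathrm{Mor}(A,B)$; and for each transversal $(A_0,\dots,A_n)$ maps $m_n:\mathrm{Mor}(A_{n-1},A_n)\otimes\cdots\otimes\mathrm{Mor}(A_0,A_1)\to\mathrm{Mor}(A_0,A_n)$ satisfying the $A_\infty$ equations $\sum(-1)^{\maltese_d}m(\dots,m(\dots),\dots)=0$ with $\maltese_d=d+\sum_{i\le d}\deg$. An element $f\in\mathrm{Mor}(A,A')$ with $m_1(f)=0$ is a quasi-isomorphism if $m_2(\cdot,f):\mathrm{Mor}(A',B')\to\mathrm{Mor}(A,B')$ and $m_2(f,\cdot):\mathrm{Mor}(B,A)\to\mathrm{Mor}(B,A')$ induce isomorphisms on $m_1$-homology whenever $(A,A',B')$, resp. $(B,A,A')$, is transversal. The pre-category is unital if for every object $A$ and finite collection of transversal sequences $S_i$ there are objects $A^+,A^-$ quasi-isomorphic to $A$ with all $(A^-,S_i,A^+)$ transversal. *)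

(* Defs.v *)
From HB Require Import structures.
From mathcomp Require Import all_boot all_order all_algebra.
Set Implicit Arguments. Unset Strict Implicit. Unset Printing Implicit Defensive.
Import Order.TTheory GRing.Theory Num.Theory.
Local Open Scope ring_scope.

Section Generic.
Variables (K : fieldType) (Obj : Type) (Mor : Obj -> Obj -> lmodType K).

Definition hom := {p : Obj * Obj & Mor p.1 p.2}.
Definition hsrc (h : hom) : Obj := (tag h).1.
Definition htgt (h : hom) : Obj := (tag h).2.
Definition mkhom (A B : Obj) (x : Mor A B) : hom := existT _ (A, B) x.

Fixpoint chainP (A B : Obj) (xs : seq hom) : Prop :=
  match xs with
  | [::] => A = B
  | x :: xs' => hsrc x = A /\ chainP (htgt x) B xs'
  end.

Definition objs (A : Obj) (xs : seq hom) : seq Obj := A :: map htgt xs.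

(* Z/2-grading: [evp] is the projection onto the even part
   (the odd part being its kernel). *)
Variable evp : forall A B, Mor A B -> Mor A B.
Definition hdeg (A B : Obj) (x : Mor A B) (d : bool) : Prop :=
  if d then evp x = 0 else evp x = x.

Fixpoint hom_list (ds : seq bool) (xs : seq hom) : Prop :=
  match ds, xs with
  | [::], [::] => True
  | d :: ds', x :: xs' => hdeg (projT2 x) d /\ hom_list ds' xs'
  | _, _ => False
  end.
End Generic.

(* mu A B [:: x_1; ...; x_n] stands for m_n(x_n, ..., x_1) in Mor(A, B). *)
Record precat (K : fieldType) := Precat {
  Obj : Type;
  transv : seq Obj -> Prop;
  transversal_forget : forall (s : seq Obj) (m : bitseq),
    transv s -> mask m s <> [::] -> transv (mask m s);
  Mor : Obj -> Obj -> lmodType K;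
  evp : forall A B, Mor A B -> Mor A B;
  evp_linear : forall A B (a : K) (u v : Mor A B),
    evp (a *: u + v) = a *: evp u + evp v;
  evp_idem : forall A B (u : Mor A B), evp (evp u) = evp u;
  mu : forall A B : Obj, seq (hom Mor) -> Mor A B;
  mu_multilinear : forall A B (pre post : seq (hom Mor)) (P Q : Obj)
    (a : K) (u v : Mor P Q),
    mu A B (pre ++ mkhom (a *: u + v) :: post) =
      a *: mu A B (pre ++ mkhom u :: post) + mu A B (pre ++ mkhom v :: post);
  (* m_n has degree 2 - n = n (mod 2) *)
  mu_degree : forall A B (xs : seq (hom Mor)) (ds : seq bool),
    (0 < size xs)%N -> chainP A B xs -> transv (objs A xs) ->
    hom_list evp ds xs ->
    hdeg evp (mu A B xs) (odd (count id ds + size xs)%N);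
  (* the A_oo equations, with sign (-1)^(maltese_d),
     maltese_d = d + deg x_1 + ... + deg x_d *)
  mu_ainf : forall A B (xs : seq (hom Mor)) (ds : seq bool),
    (0 < size xs)%N -> chainP A B xs -> transv (objs A xs) ->
    hom_list evp ds xs ->
    let ob i := nth A (objs A xs) i in
    \sum_(d < size xs) \sum_(e < size xs - d)
      ((-1) ^+ (d + count id (take d ds))%N : K) *:
        mu A B (take d xs ++
                mkhom (mu (ob d) (ob (d + e.+1)%N) (take e.+1 (drop d xs)))
                :: drop (d + e.+1)%N xs) = 0
}.

Arguments transv {K} p _.
Arguments mu {K p} A B _.
Arguments Mor {K} p _ _.
Arguments Obj {K} p.

Section Defs.
Variables (K : fieldType) (C : precat K).

Definition m1 (A B : Obj C) (x : Mor C A B) : Mor C A B :=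
  mu A B [:: mkhom x].
Definition m2 (A B D : Obj C) (g : Mor C B D) (f : Mor C A B) : Mor C A D :=
  mu A D [:: mkhom f; mkhom g].

(* phi induces a (well-defined) isomorphism on m_1-homology *)
Definition homology_iso (X Y X' Y' : Obj C) (phi : Mor C X Y -> Mor C X' Y') :=
  [/\ (forall z, m1 z = 0 -> m1 (phi z) = 0),
      (forall y, exists w, phi (m1 y) = m1 w),
      (forall z, m1 z = 0 -> (exists w, phi z = m1 w) -> exists w, z = m1 w)
    & (forall z', m1 z' = 0 -> exists z, m1 z = 0 /\ exists w, z' - phi z = m1 w)].

Definition quasi_iso (A A' : Obj C) (f : Mor C A A') : Prop :=
  [/\ m1 f = 0,
      (forall B' : Obj C, transv C [:: A; A'; B'] ->
         homology_iso (fun x : Mor C A' B' => m2 x f))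
    & (forall B : Obj C, transv C [:: B; A; A'] ->
         homology_iso (fun x : Mor C B A => m2 f x))].

Definition unital_precat : Prop :=
  forall (A : Obj C) (S : seq (seq (Obj C))),
    (forall i, (i < size S)%N -> nth [::] S i <> [::] /\ transv C (nth [::] S i)) ->
    exists (Ap Am : Obj C) (fp : Mor C A Ap) (fm : Mor C Am A),
      [/\ transv C [:: A; Ap], quasi_iso fp,
          transv C [:: Am; A], quasi_iso fm
        & forall i, (i < size S)%N -> transv C (Am :: nth [::] S i ++ [:: Ap])].
End Defs.

(* Main.v *)
Require Import Defs.
From mathcomp Require Import all_boot all_order all_algebra.
Import GRing.Theory.
Set Implicit Arguments. Unset Strict Implicit. Unset Printing Implicit Defensive.
Local Open Scope ring_scope.

Section Abs.
Variables (V W U : zmodType) (dV : V -> V) (dW : W -> W) (dU : U -> U).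

Definition addf (X Y : zmodType) (f : X -> Y) := forall a b : X, f (a - b) = f a - f b.

Lemma addf0 (X Y : zmodType) (f : X -> Y) : addf f -> f 0 = 0.
Proof. by move=> h; rewrite -(subrr 0) h subrr. Qed.
Lemma addfN (X Y : zmodType) (f : X -> Y) : addf f -> forall a, f (- a) = - f a.
Proof. by move=> h a; rewrite -sub0r h addf0 // sub0r. Qed.
Lemma addfD (X Y : zmodType) (f : X -> Y) : addf f -> forall a b, f (a + b) = f a + f b.
Proof. move=> h a b; have e : a + b = a - (- b) by rewrite opprK. by rewrite e h (addfN h) opprK. Qed.

Definition habs (X Y : zmodType) (dX : X -> X) (dY : Y -> Y) (phi : X -> Y) :=
  [/\ (forall z, dX z = 0 -> dY (phi z) = 0),
      (forall y, exists w, phi (dX y) = dY w),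
      (forall z, dX z = 0 -> (exists w, phi z = dY w) -> exists w, z = dX w)
    & (forall z', dY z' = 0 -> exists z, dX z = 0 /\ exists w, z' - phi z = dY w)].

Lemma habs_comp phi psi : addf psi -> addf dU ->
  habs dV dW phi -> habs dW dU psi -> habs dV dU (fun x => psi (phi x)).
Proof.
move=> ap ad [a1 a2 a3 a4] [b1 b2 b3 b4]; split.
- by move=> z hz; apply: b1; apply: a1.
- move=> y; case: (a2 y) => w ->; exact: b2.
- move=> z hz [w hw]; apply: a3 => //; apply: b3; first exact: a1.
  by exists w.
- move=> z'' hz''; case: (b4 _ hz'') => z' [hz' [w1 hw1]].
  case: (a4 _ hz') => z [hz [w2 hw2]]; exists z; split => //.
  case: (b2 w2) => w3 hw3; exists (w1 + w3).
  rewrite addfD // -hw1 -hw3 -hw2 ap.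
  by rewrite addrA subrK.
Qed.

Lemma habs_htpy phi psi : addf dW -> (forall x, dW (dW x) = 0) ->
  habs dV dW phi -> (forall z, dV z = 0 -> exists w, psi z - phi z = dW w) ->
  (forall y, exists w, psi (dV y) = dW w) -> habs dV dW psi.
Proof.
move=> ad dd [a1 a2 a3 a4] h p2; split => //.
- move=> z hz; case: (h z hz) => w hw.
  by rewrite -[psi z](subrK (phi z)) addfD // hw dd a1 // addr0.
- move=> z hz [w hw]; apply: a3 => //; case: (h z hz) => w' hw'.
  exists (w - w'); by rewrite ad -hw -hw' opprB addrC subrK.
- move=> z' hz'; case: (a4 _ hz') => z [hz [w hw]]; exists z; split => //.
  case: (h z hz) => w' hw'; exists (w - w').
  by rewrite ad -hw -hw' opprB addrA subrK.
Qed.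

Lemma habs_cancel phi g : addf g -> addf dW ->
  habs dW dU g -> habs dV dU (fun x => g (phi x)) ->
  (forall z, dV z = 0 -> dW (phi z) = 0) -> (forall y, exists w, phi (dV y) = dW w) ->
  habs dV dW phi.
Proof.
move=> ag ad [b1 b2 b3 b4] [c1 c2 c3 c4] p1 p2; split => //.
- move=> z hz [w hw]; apply: c3 => //; rewrite hw; exact: b2.
- move=> z' hz'; case: (c4 _ (b1 _ hz')) => z [hz [w hw]]; exists z; split => //.
  apply: b3; first by rewrite ad hz' p1 // subrr.
  by exists w; rewrite ag.
Qed.

Lemma habs_tau (t : V -> V) : addf t -> addf dV -> (forall x, t (t x) = x) ->
  (forall x, dV (t x) = - t (dV x)) -> habs dV dV t.
Proof.
move=> hat ad tt dt; split.
- by move=> z hz; rewrite dt hz addf0 // oppr0.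
- by move=> y; exists (- t y); rewrite addfN // dt opprK.
- move=> z hz [w hw]; exists (- t w).
  by rewrite addfN // dt opprK -hw tt.
- move=> z' hz'; exists (t z'); split; first by rewrite dt hz' addf0 // oppr0.
  by exists 0; rewrite tt subrr addf0.
Qed.
End Abs.

Lemma habs_ext (X Y : zmodType) (dX : X -> X) (dY : Y -> Y) (phi psi : X -> Y) :
  (forall x, phi x = psi x) -> habs dX dY phi -> habs dX dY psi.
Proof.
move=> e [a1 a2 a3 a4]; split.
- by move=> z hz; rewrite -e; apply: a1.
- by move=> y; rewrite -e; apply: a2.
- by move=> z hz; rewrite -e; apply: a3.
- by move=> z' hz'; case: (a4 _ hz') => z [hz hw]; exists z; rewrite -e.
Qed.

Section Cat.
Variables (K : fieldType) (C : precat K).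

Lemma linf (U W : lmodType K) (f : U -> W) :
  (forall a u v, f (a *: u + v) = a *: f u + f v) -> addf f.
Proof.
move=> h.
have f0 : f 0 = 0.
  have := h 1 0 0; rewrite !scale1r addr0 => e.
  by have := congr1 (fun t => t - f 0) e; rewrite subrr addrK => <-.
have fN : forall v, f (- v) = - f v.
  by move=> v; have := h (-1) v 0; rewrite addr0 f0 addr0 !scaleN1r.
by move=> a b; have := h 1 a (- b); rewrite !scale1r fN.
Qed.

Lemma addf_sub (X Y : zmodType) (f g : X -> Y) : addf f -> addf g ->
  addf (fun x => f x - g x).
Proof.
move=> hf hg a b; rewrite hf hg.
by rewrite !opprB addrACA [RHS]addrACA [- g a - f b]addrC.
Qed.

Definition tau (A B : Obj C) (x : Mor C A B) : Mor C A B := evp x - (x - evp x).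

Lemma evp_add (A B : Obj C) : addf (@evp _ C A B).
Proof. apply: linf => a u v; exact: evp_linear. Qed.

Lemma m1_add (A B : Obj C) : addf (@m1 _ C A B).
Proof. apply: linf => a u v; exact: (mu_multilinear A B [::] [::]). Qed.

Lemma m2_addl (A B D : Obj C) (f : Mor C A B) : addf (fun g : Mor C B D => m2 g f).
Proof. apply: linf => a u v; exact: (mu_multilinear A D [:: mkhom f] [::]). Qed.

Lemma m2_addr (A B D : Obj C) (g : Mor C B D) : addf (fun f : Mor C A B => m2 g f).
Proof. apply: linf => a u v; exact: (mu_multilinear A D [::] [:: mkhom g]). Qed.

Lemma tau_add (A B : Obj C) : addf (@tau A B).
Proof.
apply: addf_sub; first exact: evp_add.
apply: addf_sub; first by [].
exact: evp_add.
Qed.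

Notation hd x d := (hdeg (@evp _ C) x d).

Lemma hdeg_tau (A B : Obj C) (x : Mor C A B) d : hd x d -> tau x = if d then - x else x.
Proof. by rewrite /hdeg /tau; case: d => ->; rewrite ?subr0 ?sub0r ?subrr ?subr0. Qed.

Lemma evp_evp (A B : Obj C) (x : Mor C A B) : hd (evp x) false.
Proof. exact: evp_idem. Qed.

Lemma evp_odd (A B : Obj C) (x : Mor C A B) : hd (x - evp x) true.
Proof. by rewrite /hdeg evp_add evp_idem subrr. Qed.

Lemma evp_tau (A B : Obj C) (x : Mor C A B) : evp (tau x) = evp x.
Proof. by rewrite /tau evp_add evp_add evp_idem subrr subr0. Qed.

Lemma tau_tau (A B : Obj C) (x : Mor C A B) : tau (tau x) = x.
Proof.
rewrite {1}/tau evp_tau /tau.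
by rewrite !opprB [evp x + (x - _ - _)]addrC subrK addrC subrK.
Qed.

Lemma hsplit (A B : Obj C) (P : Mor C A B -> Prop) :
  (forall x d, hd x d -> P x) -> (forall x y, P x -> P y -> P (x + y)) -> forall x, P x.
Proof.
move=> h1 h2 x; rewrite -(subrK (evp x) x) addrC; apply: h2.
  exact: (h1 _ _ (evp_evp x)).
exact: (h1 _ _ (evp_odd x)).
Qed.

Lemma m1_deg (A B : Obj C) (x : Mor C A B) d : transv C [:: A; B] -> hd x d -> hd (m1 x) (~~ d).
Proof.
move=> T hx.
have := @mu_degree _ C A B [:: mkhom x] [:: d] isT (conj erefl erefl) T (conj hx I).
by case: d hx.
Qed.

Lemma m1_cyc (A B : Obj C) (z : Mor C A B) : transv C [:: A; B] -> m1 z = 0 ->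
  m1 (evp z) = 0 /\ m1 (z - evp z) = 0.
Proof.
move=> T hz.
have h1 := m1_deg T (evp_evp z); have h2 := m1_deg T (evp_odd z).
rewrite /hdeg /= in h1 h2.
have e : m1 (z - evp z) = 0.
  have := congr1 (@evp _ C _ _) hz.
  rewrite -{1}(subrK (evp z) z) addrC (addfD (@m1_add A B)).
  by rewrite (addfD (@evp_add A B)) h1 h2 add0r (addf0 (@evp_add A B)).
split => //.
by have := hz; rewrite -{1}(subrK (evp z) z) (addfD (@m1_add A B)) e add0r.
Qed.

Lemma hsplit_cyc (A B : Obj C) (P : Mor C A B -> Prop) : transv C [:: A; B] ->
  (forall x d, hd x d -> m1 x = 0 -> P x) -> (forall x y, P x -> P y -> P (x + y)) ->
  forall x, m1 x = 0 -> P x.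
Proof.
move=> T h1 h2 x hx; have [c1 c2] := m1_cyc T hx.
rewrite -(subrK (evp x) x) addrC; apply: h2.
  exact: (h1 _ _ (evp_evp x)).
exact: (h1 _ _ (evp_odd x)).
Qed.

Lemma zero_of (V : lmodType K) (x : V) : x = 1 *: x + x -> x = 0.
Proof. by rewrite scale1r => e; have := congr1 (fun t => t - x) e; rewrite subrr addrK. Qed.

Lemma m1m1 (A B : Obj C) (x : Mor C A B) : transv C [:: A; B] -> m1 (m1 x) = 0.
Proof.
move=> T; move: x; apply: hsplit => [x d hx|x y]; last first.
  by rewrite !(addfD (@m1_add A B)) => -> ->; rewrite addr0.
have := @mu_ainf _ C A B [:: mkhom x] [:: d] isT (conj erefl erefl) T (conj hx I).
rewrite /= !big_ord_recl !big_ord0 /=.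
by rewrite add0n expr0 scale1r !addr0.
Qed.

Lemma m1_tau (A B : Obj C) (x : Mor C A B) : transv C [:: A; B] -> m1 (tau x) = - tau (m1 x).
Proof.
move=> T; move: x; apply: hsplit => [x d hx|x y].
  rewrite (hdeg_tau hx) (hdeg_tau (m1_deg T hx)).
  by case: d hx => _ /=; rewrite ?opprK // (addfN (@m1_add A B)).
move=> hx hy; rewrite (addfD (@tau_add A B)) (addfD (@m1_add A B)) hx hy.
rewrite (addfD (@m1_add A B) x y) -opprD; congr (- _); symmetry.
exact: (addfD (@tau_add A B)).
Qed.

Lemma mu0 (X Y P Q : Obj C) pre post :
  mu X Y (pre ++ mkhom (0 : Mor C P Q) :: post) = 0.
Proof.
apply: zero_of; have := mu_multilinear X Y pre post 1 (0 : Mor C P Q) 0.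
by rewrite scale1r addr0.
Qed.

Lemma m2_hom (A B D : Obj C) (f : Mor C A B) (g : Mor C B D) df dg :
  transv C [:: A; B; D] -> hd f df -> hd g dg ->
  m2 g (m1 f) + m1 (m2 g f) + (-1) ^+ (1 + df) *: m2 (m1 g) f = 0.
Proof.
move=> T hf hg.
have := @mu_ainf _ C A D [:: mkhom f; mkhom g] [:: df; dg] isT
   (conj erefl (conj erefl erefl)) T (conj hf (conj hg I)).
rewrite /= !big_ord_recl !big_ord0 /=.
rewrite add0n addn0 expr0 !scale1r !addr0; change (bump 0 0) with 1%N.
by move=> h; exact: h.
Qed.

Lemma tfb (s : seq (Obj C)) m : transv C s -> (0 < size (mask m s))%N -> transv C (mask m s).
Proof. move=> T h; apply: transversal_forget => // e; by rewrite e in h. Qed.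

Lemma solve3 (V : zmodType) (X Y Z : V) : X + Y + Z = 0 -> Y = - Z - X.
Proof.
move=> e; have : (X + Y + Z) - Z - X = Y by rewrite addrK [X + Y]addrC addrK.
by rewrite e sub0r.
Qed.

Lemma subACA (V : zmodType) (a b c d : V) : (a - b) + (c - d) = (a + c) - (b + d).
Proof. by rewrite opprD addrACA. Qed.

Lemma signE (V : lmodType K) (v : V) (d : bool) :
  (-1) ^+ (1 + d) *: v = if d then v else - v.
Proof.
case: d; last by rewrite addn0 expr1 scaleN1r.
by change (1 + true)%N with 2%N; rewrite sqrrN expr1n scale1r.
Qed.

Lemma m2_m1 (A B D : Obj C) (f : Mor C A B) (g : Mor C B D) :
  transv C [:: A; B; D] -> m1 (m2 g f) = m2 (m1 g) (tau f) - m2 g (m1 f).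
Proof.
move=> T; have TAB : transv C [:: A; B] := @tfb _ [:: true; true; false] T isT.
have TBD : transv C [:: B; D] := @tfb _ [:: false; true; true] T isT.
move: f g; apply: (hsplit (P := fun f => forall g : Mor C B D,
  m1 (m2 g f) = m2 (m1 g) (tau f) - m2 g (m1 f))) => [f df hf|f1 f2 h1 h2] g.
  move: g; apply: hsplit => [g dg hg|g1 g2 h1 h2].
    have := m2_hom T hf hg; rewrite signE (hdeg_tau hf).
    case: df hf => _ /solve3 ->; last by rewrite opprK.
    by rewrite (addfN (@m2_addr A B D (m1 g))).
  rewrite (addfD (@m2_addl A B D f) g1 g2) (addfD (@m1_add A D)) h1 h2.
  rewrite (addfD (@m1_add B D) g1 g2) (addfD (@m2_addl A B D (tau f))).
  by rewrite (addfD (@m2_addl A B D (m1 f))) -subACA.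
rewrite (addfD (@m2_addr A B D g) f1 f2) (addfD (@m1_add A D)) h1 h2.
rewrite (addfD (@tau_add A B) f1 f2) (addfD (@m2_addr A B D (m1 g))).
by rewrite (addfD (@m1_add A B) f1 f2) (addfD (@m2_addr A B D g)) -subACA.
Qed.

Lemma tau_m2 (A B D : Obj C) (f : Mor C A B) (g : Mor C B D) :
  transv C [:: A; B; D] -> tau (m2 g f) = m2 (tau g) (tau f).
Proof.
move=> T.
move: f g; apply: (hsplit (P := fun f => forall g : Mor C B D,
  tau (m2 g f) = m2 (tau g) (tau f))) => [f df hf|f1 f2 h1 h2] g.
  move: g; apply: hsplit => [g dg hg|g1 g2 h1 h2].
    have := @mu_degree _ C A D [:: mkhom f; mkhom g] [:: df; dg] isT
      (conj erefl (conj erefl erefl)) T (conj hf (conj hg I)) => hm.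
    rewrite (hdeg_tau hm) (hdeg_tau hf) (hdeg_tau hg).
    case: df dg {hf hg hm} => [] [] /=;
      by rewrite ?(addfN (@m2_addr A B D _)) ?(addfN (@m2_addl A B D _)) ?opprK.
  rewrite (addfD (@m2_addl A B D f) g1 g2) (addfD (@tau_add A D)) h1 h2.
  by rewrite (addfD (@tau_add B D) g1 g2) (addfD (@m2_addl A B D (tau f))).
rewrite (addfD (@m2_addr A B D g) f1 f2) (addfD (@tau_add A D)) h1 h2.
by rewrite (addfD (@tau_add A B) f1 f2) (addfD (@m2_addr A B D (tau g))).
Qed.

Lemma mu0a (X Y P Q : Obj C) h1 h2 : mu X Y [:: mkhom (0 : Mor C P Q); h1; h2] = 0.
Proof. exact: (@mu0 X Y P Q [::] [:: h1; h2]). Qed.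
Lemma mu0b (X Y P Q : Obj C) h1 h2 : mu X Y [:: h1; mkhom (0 : Mor C P Q); h2] = 0.
Proof. exact: (@mu0 X Y P Q [:: h1] [:: h2]). Qed.
Lemma mu0c (X Y P Q : Obj C) h1 h2 : mu X Y [:: h1; h2; mkhom (0 : Mor C P Q)] = 0.
Proof. exact: (@mu0 X Y P Q [:: h1; h2] [::]). Qed.

Lemma m3_hom (A B D E : Obj C) (c : Mor C A B) (b : Mor C B D) (a : Mor C D E) dc db da :
  transv C [:: A; B; D; E] -> hd c dc -> hd b db -> hd a da ->
  m1 c = 0 -> m1 b = 0 -> m1 a = 0 ->
  exists w, m2 a (m2 b c) - m2 (m2 a b) (tau c) = m1 w.
Proof.
move=> T hc hb ha c0 b0 a0.
have := @mu_ainf _ C A E [:: mkhom c; mkhom b; mkhom a] [:: dc; db; da] isT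
  (conj erefl (conj erefl (conj erefl erefl))) T (conj hc (conj hb (conj ha I))).
rewrite /= !big_ord_recl !big_ord0 /= /htgt /=.
rewrite (c0 : mu A B [:: mkhom c] = 0) (b0 : mu B D [:: mkhom b] = 0).
rewrite (a0 : mu D E [:: mkhom a] = 0) mu0a mu0b mu0c !scaler0 !addr0 !add0r.
rewrite add0n expr0 !scale1r addn0; change (bump 0 0) with 1%N.
rewrite signE (hdeg_tau hc) => /solve3 e.
exists (- mu A E [:: mkhom c; mkhom b; mkhom a]); rewrite (addfN (@m1_add A E)).
transitivity (- (- (if dc then mu A E [:: mkhom c; mkhom (mu B E [:: mkhom b; mkhom a])]
     else - mu A E [:: mkhom c; mkhom (mu B E [:: mkhom b; mkhom a])])
     - mu A E [:: mkhom (mu A D [:: mkhom c; mkhom b]); mkhom a])); last by rewrite -e.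
case: dc {hc e} => /=;
  by rewrite ?(addfN (@m2_addr A B E (m2 a b))) opprB ?opprK.
Qed.

Lemma bdD (A B : Obj C) (x y : Mor C A B) :
  (exists w, x = m1 w) -> (exists w, y = m1 w) -> exists w, x + y = m1 w.
Proof. by move=> [w1 ->] [w2 ->]; exists (w1 + w2); rewrite (addfD (@m1_add A B)). Qed.

Lemma m3_rel (A B D E : Obj C) (c : Mor C A B) (b : Mor C B D) (a : Mor C D E) :
  transv C [:: A; B; D; E] -> m1 c = 0 -> m1 b = 0 -> m1 a = 0 ->
  exists w, m2 a (m2 b c) - m2 (m2 a b) (tau c) = m1 w.
Proof.
move=> T.
have TAB : transv C [:: A; B] := @tfb _ [:: true; true; false; false] T isT.
have TBD : transv C [:: B; D] := @tfb _ [:: false; true; true; false] T isT.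
have TDE : transv C [:: D; E] := @tfb _ [:: false; false; true; true] T isT.
move: c; apply: (hsplit_cyc (P := fun c => m1 b = 0 -> m1 a = 0 ->
  exists w, m2 a (m2 b c) - m2 (m2 a b) (tau c) = m1 w)) => //
  [c dc hc c0 | c1 c2 h1 h2 b0 a0].
  move: b; apply: (hsplit_cyc (P := fun b => m1 a = 0 ->
    exists w, m2 a (m2 b c) - m2 (m2 a b) (tau c) = m1 w)) => //
    [b db hb b0 | b1 b2 h1 h2 a0].
    move: a; apply: (hsplit_cyc (P := fun a =>
      exists w, m2 a (m2 b c) - m2 (m2 a b) (tau c) = m1 w)) => //
      [a da ha a0 | a1 a2 h1 h2].
      exact: (m3_hom T hc hb ha).
    rewrite (addfD (@m2_addl A D E (m2 b c))) (addfD (@m2_addl B D E b)).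
    rewrite (addfD (@m2_addl A B E (tau c))) -subACA.
    exact: bdD.
  rewrite (addfD (@m2_addl A B D c)) (addfD (@m2_addr A D E a)).
  rewrite (addfD (@m2_addr B D E a)) (addfD (@m2_addl A B E (tau c))) -subACA.
  exact: bdD (h1 a0) (h2 a0).
rewrite (addfD (@m2_addr A B D b)) (addfD (@m2_addr A D E a)).
rewrite (addfD (@tau_add A B)) (addfD (@m2_addr A B E (m2 a b))) -subACA.
exact: bdD (h1 b0 a0) (h2 b0 a0).
Qed.

Lemma bdN (A B : Obj C) (x : Mor C A B) :
  (exists w, x = m1 w) -> exists w, - x = m1 w.
Proof. by move=> [w ->]; exists (- w); rewrite (addfN (@m1_add A B)). Qed.

Lemma m1_tau0 (A B : Obj C) (e : Mor C A B) : transv C [:: A; B] -> m1 e = 0 -> m1 (tau e) = 0.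
Proof. by move=> T h; rewrite m1_tau // h (addf0 (@tau_add A B)) oppr0. Qed.

Lemma R1 (A B D : Obj C) (e : Mor C A B) (z : Mor C B D) :
  transv C [:: A; B; D] -> m1 e = 0 -> m1 z = 0 -> m1 (m2 z e) = 0.
Proof.
move=> T he hz; rewrite m2_m1 // he hz (addf0 (@m2_addr A B D z)).
by rewrite (addf0 (@m2_addl A B D (tau e))) subr0.
Qed.

Lemma R2 (A B D : Obj C) (e : Mor C A B) (y : Mor C B D) :
  transv C [:: A; B; D] -> m1 e = 0 -> m2 (m1 y) e = m1 (m2 y (tau e)).
Proof.
move=> T he; rewrite m2_m1 // tau_tau m1_tau0 // ?(addf0 (@m2_addr A B D y)) ?subr0 //.
exact: (@tfb _ [:: true; true; false] T isT).
Qed.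

Lemma L2 (A B D : Obj C) (e : Mor C B D) (y : Mor C A B) :
  transv C [:: A; B; D] -> m1 e = 0 -> m2 e (m1 y) = m1 (- m2 e y).
Proof.
move=> T he; rewrite (addfN (@m1_add A D)) m2_m1 // he.
by rewrite (addf0 (@m2_addl A B D (tau y))) sub0r opprK.
Qed.

Lemma L1 (A B D : Obj C) (e : Mor C B D) (z : Mor C A B) :
  transv C [:: A; B; D] -> m1 e = 0 -> m1 z = 0 -> m1 (m2 e z) = 0.
Proof.
move=> T he hz; rewrite m2_m1 // he hz (addf0 (@m2_addr A B D e)).
by rewrite (addf0 (@m2_addl A B D (tau z))) subr0.
Qed.

Lemma tau_habs (A B : Obj C) : transv C [:: A; B] ->
  habs (@m1 _ C A B) (@m1 _ C A B) (@tau A B).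
Proof.
move=> T; apply: habs_tau; [exact: tau_add | exact: m1_add | exact: tau_tau |].
by move=> x; apply: m1_tau.
Qed.

Lemma tw_r (A B D : Obj C) (e : Mor C A B) : transv C [:: A; B; D] ->
  habs (@m1 _ C B D) (@m1 _ C A D) (fun y => m2 y e) ->
  habs (@m1 _ C B D) (@m1 _ C A D) (fun y => m2 y (tau e)).
Proof.
move=> T h.
have TAD : transv C [:: A; D] := @tfb _ [:: true; false; true] T isT.
have TBD : transv C [:: B; D] := @tfb _ [:: false; true; true] T isT.
apply: (habs_ext (phi := fun y => tau (m2 (tau y) e))).
  by move=> y; rewrite tau_m2 // tau_tau.
apply: (habs_comp (dW := @m1 _ C A D) (phi := fun y => m2 (tau y) e) (psi := @tau A D)); [exact: tau_add | exact: m1_add | | exact: tau_habs].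
apply: (habs_comp (dW := @m1 _ C B D) (phi := @tau B D) (psi := fun y => m2 y e)); [exact: m2_addl | exact: m1_add | exact: tau_habs | exact: h].
Qed.

Lemma hyp2 (s1 s2 : seq (Obj C)) : s1 <> [::] -> s2 <> [::] -> transv C s1 -> transv C s2 ->
  forall i, (i < size [:: s1; s2])%N -> nth [::] [:: s1; s2] i <> [::] /\ transv C (nth [::] [:: s1; s2] i).
Proof. by move=> n1 n2 t1 t2 [|[|i]]. Qed.

Lemma right_clause (A1 A2 A3 : Obj C) (e12 : Mor C A1 A2) (e23 : Mor C A2 A3) :
  unital_precat C -> transv C [:: A1; A2; A3] ->
  quasi_iso e12 -> quasi_iso e23 -> forall B' : Obj C, transv C [:: A1; A3; B'] ->
  homology_iso (fun x : Mor C A3 B' => m2 x (m2 e23 e12)).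
Proof.
move=> U T [c12 r12 l12] [c23 r23 l23] B' TB.
have n1 : [:: A1; A2; A3] <> [::] by discriminate.
have n2 : [:: A1; A3; B'] <> [::] by discriminate.
have [Ap [Am [fp [fm [Tp [cp rp lp] Tm Qm Hall]]]]] :=
  U B' [:: [:: A1; A2; A3]; [:: A1; A3; B']] (hyp2 n1 n2 T TB).
have H0 : transv C [:: Am; A1; A2; A3; Ap] := Hall 0%N isT.
have H1 : transv C [:: Am; A1; A3; B'; Ap] := Hall 1%N isT.
have T4a : transv C [:: A1; A2; A3; Ap] := @tfb _ [:: false; true; true; true; true] H0 isT.
have T13p : transv C [:: A1; A3; Ap] := @tfb _ [:: false; true; false; true; true] H0 isT.
have T23p : transv C [:: A2; A3; Ap] := @tfb _ [:: false; false; true; true; true] H0 isT.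
have T12p : transv C [:: A1; A2; Ap] := @tfb _ [:: false; true; true; false; true] H0 isT.
have T1p : transv C [:: A1; Ap] := @tfb _ [:: false; true; false; false; true] H0 isT.
have T12 : transv C [:: A1; A2] := @tfb _ [:: false; true; true; false; false] H0 isT.
have T23 : transv C [:: A2; A3] := @tfb _ [:: false; false; true; true; false] H0 isT.
have T13 : transv C [:: A1; A3] := @tfb _ [:: false; true; false; true; false] H0 isT.
have T4b : transv C [:: A1; A3; B'; Ap] := @tfb _ [:: false; true; true; true; true] H1 isT.
have T3Bp : transv C [:: A3; B'; Ap] := @tfb _ [:: false; false; true; true; true] H1 isT.
have T1Bp : transv C [:: A1; B'; Ap] := @tfb _ [:: false; true; false; true; true] H1 isT.
have c13 : m1 (m2 e23 e12) = 0 := R1 T c12 c23.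
set e13 := m2 e23 e12 in c13 *.
change (habs (@m1 _ C A3 B') (@m1 _ C A1 B') (fun x => m2 x e13)).
apply: (habs_cancel (dU := @m1 _ C A1 Ap) (g := fun y : Mor C A1 B' => m2 fp y)).
- exact: m2_addr.
- exact: m1_add.
- exact: (lp A1 T1Bp).
- apply: (habs_htpy (phi := fun x => m2 (m2 fp x) (tau e13))).
  + exact: m1_add.
  + by move=> x; apply: m1m1.
  + apply: (habs_comp (dW := @m1 _ C A3 Ap) (phi := fun x : Mor C A3 B' => m2 fp x)
                      (psi := fun y : Mor C A3 Ap => m2 y (tau e13))).
    * exact: m2_addl.
    * exact: m1_add.
    * exact: (lp A3 T3Bp).
    * apply: (habs_htpy (phi := fun y : Mor C A3 Ap => m2 (m2 y (tau e23)) e12)).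
      -- exact: m1_add.
      -- by move=> x; apply: m1m1.
      -- apply: (habs_comp (dW := @m1 _ C A2 Ap) (phi := fun y : Mor C A3 Ap => m2 y (tau e23))
                           (psi := fun y : Mor C A2 Ap => m2 y e12)).
         ++ exact: m2_addl.
         ++ exact: m1_add.
         ++ exact: (tw_r T23p (r23 Ap T23p)).
         ++ exact: (r12 Ap T12p).
      -- move=> y hy.
         have := m3_rel T4a (m1_tau0 T12 c12) (m1_tau0 T23 c23) hy.
         by rewrite tau_tau -tau_m2.
      -- move=> y; rewrite (R2 _ T13p (m1_tau0 T13 c13)); eexists; reflexivity.
  + move=> z hz; exact: (m3_rel T4b c13 hz cp).
  + move=> y; rewrite (R2 _ TB c13) (L2 _ T1Bp cp); eexists; reflexivity.
- by move=> z hz; apply: R1.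
- by move=> y; rewrite (R2 _ TB c13); eexists; reflexivity.
Qed.

Lemma left_clause (A1 A2 A3 : Obj C) (e12 : Mor C A1 A2) (e23 : Mor C A2 A3) :
  unital_precat C -> transv C [:: A1; A2; A3] ->
  quasi_iso e12 -> quasi_iso e23 -> forall B : Obj C, transv C [:: B; A1; A3] ->
  homology_iso (fun x : Mor C B A1 => m2 (m2 e23 e12) x).
Proof.
move=> U T [c12 r12 l12] [c23 r23 l23] B TB.
have n1 : [:: A1; A2; A3] <> [::] by discriminate.
have n2 : [:: B; A1; A3] <> [::] by discriminate.
have [Ap [Am [fp [fm [Tp Qp Tm [cm rm lm] Hall]]]]] :=
  U B [:: [:: A1; A2; A3]; [:: B; A1; A3]] (hyp2 n1 n2 T TB).
have H0 : transv C [:: Am; A1; A2; A3; Ap] := Hall 0%N isT.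
have H1 : transv C [:: Am; B; A1; A3; Ap] := Hall 1%N isT.
have T4a : transv C [:: Am; A1; A2; A3] := @tfb _ [:: true; true; true; true; false] H0 isT.
have Tm12 : transv C [:: Am; A1; A2] := @tfb _ [:: true; true; true; false; false] H0 isT.
have Tm23 : transv C [:: Am; A2; A3] := @tfb _ [:: true; false; true; true; false] H0 isT.
have Tm13 : transv C [:: Am; A1; A3] := @tfb _ [:: true; true; false; true; false] H0 isT.
have Tm1 : transv C [:: Am; A1] := @tfb _ [:: true; true; false; false; false] H0 isT.
have Tm3 : transv C [:: Am; A3] := @tfb _ [:: true; false; false; true; false] H0 isT.
have T4b : transv C [:: Am; B; A1; A3] := @tfb _ [:: true; true; true; true; false] H1 isT.
have TmB1 : transv C [:: Am; B; A1] := @tfb _ [:: true; true; true; false; false] H1 isT.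
have TmB3 : transv C [:: Am; B; A3] := @tfb _ [:: true; true; false; true; false] H1 isT.
have TmB : transv C [:: Am; B] := @tfb _ [:: true; true; false; false; false] H1 isT.
have c13 : m1 (m2 e23 e12) = 0 := R1 T c12 c23.
set e13 := m2 e23 e12 in c13 *.
change (habs (@m1 _ C B A1) (@m1 _ C B A3) (fun x => m2 e13 x)).
apply: (habs_cancel (dU := @m1 _ C Am A3) (g := fun y : Mor C B A3 => m2 y fm)).
- exact: m2_addl.
- exact: m1_add.
- exact: (rm A3 TmB3).
- apply: (habs_htpy (phi := fun x => m2 e13 (m2 x (tau fm)))).
  + exact: m1_add.
  + by move=> x; apply: m1m1.
  + apply: (habs_comp (dW := @m1 _ C Am A1) (phi := fun x : Mor C B A1 => m2 x (tau fm))
                      (psi := fun y : Mor C Am A1 => m2 e13 y)).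
    * exact: m2_addr.
    * exact: m1_add.
    * exact: (tw_r TmB1 (rm A1 TmB1)).
    * apply: (habs_htpy (phi := fun y : Mor C Am A1 => m2 e23 (m2 e12 (tau y)))).
      -- exact: m1_add.
      -- by move=> x; apply: m1m1.
      -- apply: (habs_comp (dW := @m1 _ C Am A2) (phi := fun y : Mor C Am A1 => m2 e12 (tau y))
                           (psi := fun y : Mor C Am A2 => m2 e23 y)).
         ++ exact: m2_addr.
         ++ exact: m1_add.
         ++ apply: (habs_comp (dW := @m1 _ C Am A1) (phi := @tau Am A1)
                      (psi := fun y : Mor C Am A1 => m2 e12 y)).
            ** exact: m2_addr.
            ** exact: m1_add.
            ** exact: tau_habs.
            ** exact: (l12 Am Tm12).
         ++ exact: (l23 Am Tm23).
      -- move=> y hy.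
         have := m3_rel T4a (m1_tau0 Tm1 hy) c12 c23.
         by rewrite tau_tau => /bdN; rewrite opprB.
      -- move=> y; rewrite (L2 _ Tm13 c13); eexists; reflexivity.
  + move=> z hz.
    have := m3_rel T4b (m1_tau0 TmB cm) hz c13.
    by rewrite tau_tau => /bdN; rewrite opprB.
  + move=> y; rewrite (L2 _ TB c13) (R2 _ TmB3 cm); eexists; reflexivity.
- by move=> z hz; apply: L1.
- by move=> y; rewrite (L2 _ TB c13); eexists; reflexivity.
Qed.
End Cat.

Unset Implicit Arguments. Set Strict Implicit.
Theorem mainTheorem15 (K : fieldType) (C : precat K) (A1 A2 A3 : Obj C)
  (e12 : Mor C A1 A2) (e23 : Mor C A2 A3) :
  unital_precat C -> transv C [:: A1; A2; A3] ->
  quasi_iso e12 -> quasi_iso e23 -> quasi_iso (m2 e23 e12).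
Proof.
move=> U T q12 q23; split.
- by case: q12 => c12 _ _; case: q23 => c23 _ _; apply: R1.
- move=> B' TB; exact: (right_clause U T q12 q23 TB).
- move=> B TB; exact: (left_clause U T q12 q23 TB).
Qed.
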